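(* Let $c>0$ be a constant. If $mp<c$ and $p\le1/2$, then for every $q\in[0,1]$, \[ \ell_1(\mathrm{Bin}(m,p),\mathrm{Bin}(m,q))\ge\frac{e^{-3c/2}}{2}\min\left(m|p-q|,1\right). \]
   Context: $m$ is a positive integer, $p\in[0,1]$, and $\ell_1(P,Q)=\sum_x|P(x)-Q(x)|$. *)

(* Defs.v *)
From Stdlib Require Import Reals.
Open Scope R_scope.

Definition binom_pmf (m : nat) (p : R) (k : nat) : R :=
  C m k * p ^ k * (1 - p) ^ (m - k).

(* l1 distance between Bin(m,p) and Bin(m,q): both are supported on {0,...,m},
   so the sum over all x reduces to the sum over k = 0..m. *)
Definition l1_binom (m : nat) (p q : R) : R :=
  sum_f_R0 (fun k => Rabs (binom_pmf m p k - binom_pmf m q k)) m.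

(* Main.v *)
Require Import Defs.
From Stdlib Require Import Reals Lra Lia Psatz.
Open Scope R_scope.
Lemma exp_quad y : 0 <= y -> 1 + y + y^2/2 <= exp y.
Proof.
  intros Hy.
  set (f := (exp - fct_cte 1 - id - mult_real_fct (/2) (id * id))%F).
  assert (D : forall x, derivable_pt_lim f x (exp x - 0 - 1 - /2 * (1 * x + x * 1))).
  { intros x. unfold f.
    apply derivable_pt_lim_minus. apply derivable_pt_lim_minus.
    apply derivable_pt_lim_minus. apply derivable_pt_lim_exp.
    apply derivable_pt_lim_const. apply derivable_pt_lim_id.
    apply derivable_pt_lim_scal. apply derivable_pt_lim_mult; apply derivable_pt_lim_id. }
  set (pr := fun x => exist _ _ (D x) : derivable_pt f x).
  assert (I : increasing f).
  { apply (nonneg_derivative_1 f pr). intros x. simpl.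
    pose proof (exp_ineq1_le x). lra. }
  pose proof (I 0 y Hy). unfold f in H. simpl in H.
  unfold fct_cte, mult_real_fct, mult_fct, id in H. unfold minus_fct in H. rewrite exp_0 in H. lra.
Qed.

Lemma exp_n n x : exp (INR n * x) = exp x ^ n.
Proof. induction n. simpl. rewrite Rmult_0_l; apply exp_0.
  rewrite S_INR, <- tech_pow_Rmult, <- IHn, <- exp_plus. f_equal; ring. Qed.

Lemma key p : 0 <= p <= 1/2 -> exp (-(3*p/2)) <= 1 - p.
Proof. intros Hp. rewrite exp_Ropp.
  pose proof (exp_quad (3*p/2) ltac:(lra)). pose proof (exp_pos (3*p/2)).
  apply (Rmult_le_reg_l (exp (3*p/2))); auto.
  rewrite Rinv_r by lra. nra. Qed.

Lemma bonf x m : 0 <= x <= 1 -> (1-x)^m <= 1 - INR m * x + INR m*(INR m - 1)/2 * x^2.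
Proof. intros Hx. induction m. simpl; lra.
  rewrite S_INR. simpl pow in *. pose proof (pos_INR m).
  assert (0 <= INR m * (INR m - 1) \/ m = 0%nat).
  { destruct m. now right. left. rewrite S_INR. pose proof (pos_INR m). nra. }
  destruct H0.
  assert (0 <= INR m * (INR m - 1) * (x*(x*x))) by (apply Rmult_le_pos; nra).
  assert ((1-x) * (1-x)^m <= (1-x) * (1 - INR m * x + INR m*(INR m - 1)/2 * (x*(x*1)))) by (apply Rmult_le_compat_l; lra).
  nra. subst. simpl. lra. Qed.

Lemma diffpow a b m : 0 <= b <= a -> a^(S m) - b^(S m) >= INR (S m) * (a-b) * b^m.
Proof. intros H. induction m. simpl; lra.
  rewrite S_INR. simpl pow in *. rewrite S_INR in IHm.
  pose proof (pos_INR m). pose proof (pow_le b m ltac:(lra)).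
  assert (a * (a*a^m - b*b^m) >= a * ((INR m + 1) * (a-b) * b^m)) by (apply Rle_ge, Rmult_le_compat_l; lra).
  assert (0 <= (INR m + 1) * (a-b) * b^m * (a - b)) by (repeat apply Rmult_le_pos; lra).
  rewrite S_INR. nra. Qed.

Lemma sum0 f n : (forall k, 0 <= f k) -> f 0%nat <= sum_f_R0 f n.
Proof. intros H. induction n. simpl; lra. simpl. specialize (H (S n)). lra. Qed.

Lemma pmf0 m p : binom_pmf m p 0 = (1-p)^m.
Proof. unfold binom_pmf, C. rewrite Nat.sub_0_r. simpl. field. apply INR_fact_neq_0. Qed.

Lemma powE c m p : 0 < c -> 0 <= p <= 1/2 -> INR m * p < c -> exp (-(3*c/2)) <= (1-p)^m.
Proof. intros Hc Hp Hm.
  apply Rle_trans with (exp (INR m * (-(3*p/2)))).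
  { destruct (Req_dec (INR m * p) c). 2: {left; apply exp_increasing. lra. }  lra. }
  rewrite exp_n. apply pow_incr. split. left; apply exp_pos. apply key; lra. Qed.

Theorem lemma6 (c : R) (m : nat) (p q : R) :
  0 < c -> (0 < m)%nat -> 0 <= p <= 1 -> 0 <= q <= 1 ->
  INR m * p < c -> p <= 1 / 2 ->
  l1_binom m p q >= exp (- (3 * c / 2)) / 2 * Rmin (INR m * Rabs (p - q)) 1.
Proof.
  intros Hc Hm Hp Hq Hmp Hp2.
  apply Rle_ge. apply Rle_trans with (Rabs ((1-p)^m - (1-q)^m)).
  2: { unfold l1_binom. rewrite <- !pmf0.
       apply (sum0 (fun k => Rabs (binom_pmf m p k - binom_pmf m q k))). intros; apply Rabs_pos. }
  pose proof (powE c m p Hc ltac:(lra) Hmp) as HE.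
  set (E := exp (-(3*c/2))) in *. set (A := (1-p)^m) in *.
  pose proof (exp_pos (-(3*c/2))) as HE0. fold E in HE0.
  assert (HmR : 1 <= INR m) by (apply (le_INR 1); lia).
  destruct (Rle_dec q p) as [Hqp|Hqp].
  - rewrite (Rabs_right (p - q)) by lra. rewrite Rabs_left1.
    2: { unfold A. apply Rle_minus, pow_incr. lra. }
    destruct m as [|k]. lia.
    pose proof (diffpow (1-q) (1-p) k ltac:(lra)).
    assert (A <= (1-p)^k). { unfold A. simpl. pose proof (pow_le (1-p) k ltac:(lra)). nra. }
    assert (Rmin (INR (S k) * (p - q)) 1 <= INR (S k) * (p-q)) by (apply Rle_trans with (1:=Rmin_l _ _); lra).
    assert (0 <= Rmin (INR (S k) * (p - q)) 1) by (apply Rmin_glb; nra).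
    assert (E/2 * Rmin (INR (S k) * (p - q)) 1 <= E/2 * (INR (S k) * (p-q))) by (apply Rmult_le_compat_l; lra).
    assert (E * (INR (S k) * (p-q)) <= A * (INR (S k) * (p-q))) by (apply Rmult_le_compat_r; nra).
    assert (A * (INR (S k) * (p-q)) <= (1-p)^k * (INR (S k) * (p-q))) by (apply Rmult_le_compat_r; nra).
    replace (1 - q - (1 - p)) with (p - q) in H by ring.
    unfold A in *. set (X := Rmin _ _) in *. set (Y := INR (S k) * (p - q)) in *.
    assert (INR (S k) * (p - q) * (1 - p) ^ k = (1-p)^k * Y) by (unfold Y; ring).
    assert (0 <= E * Y) by (unfold Y; nra).
    lra.
  - rewrite (Rabs_left1 (p - q)) by lra. replace (- (p - q)) with (q - p) by ring.
    set (r := (1-q)/(1-p)).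
    assert (Hr : (1-q)^m = r^m * A).
    { unfold A. rewrite <- Rpow_mult_distr. f_equal. unfold r. field. lra. }
    assert (Hr0 : 0 <= r) by (unfold r; apply Rmult_le_pos; [lra| left; apply Rinv_0_lt_compat; lra]).
    assert (Hr1 : r <= 1 - (q - p)).
    { unfold r. apply (Rmult_le_reg_r (1-p)). lra. unfold Rdiv. rewrite Rmult_assoc, Rinv_l by lra. nra. }
    set (x := Rmin (q - p) (1 / INR m)).
    assert (Hx : INR m * x = Rmin (INR m * (q - p)) 1).
    { unfold x. destruct (Rle_dec (q - p) (1 / INR m)).
      - rewrite Rmin_left by lra. rewrite Rmin_left. lra.
        apply (Rmult_le_compat_l (INR m)) in r0; [|lra]. rewrite <- (Rinv_r (INR m)) by lra. unfold Rdiv in r0. lra.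
      - rewrite Rmin_right by lra. rewrite Rmin_right. field. lra.
        assert (1 / INR m < q - p) by lra.
        apply (Rmult_lt_compat_l (INR m)) in H; [|lra]. unfold Rdiv in H. rewrite Rmult_1_l, Rinv_r in H by lra. lra. }
    rewrite <- Hx.
    assert (Hx0 : 0 <= x). { unfold x. apply Rmin_glb. lra. unfold Rdiv. rewrite Rmult_1_l. left; apply Rinv_0_lt_compat; lra. }
    assert (Hxd : x <= q - p) by apply Rmin_l.
    assert (Hmx : INR m * x <= 1) by (rewrite Hx; apply Rmin_r).
    assert (Hrm : r^m <= (1-x)^m) by (apply pow_incr; lra).
    pose proof (bonf x m ltac:(lra)) as Hb.
    assert (INR m * (INR m - 1) / 2 * x^2 <= INR m * x / 2) by (assert (0 <= (INR m * x) * (1 - (INR m - 1) * x)) by (apply Rmult_le_pos; nra); nra).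
    rewrite Hr. rewrite Rabs_right.
    2: { assert (r^m <= 1) by (eapply Rle_trans; [apply Hrm| apply Rle_trans with (1^m); [apply pow_incr; lra | rewrite pow1; lra]]). assert (r^m * A <= 1 * A) by (apply Rmult_le_compat_r; lra). lra. }
    assert (A * (INR m * x / 2) <= A - r^m * A) by nra.
    assert (E * (INR m * x) <= A * (INR m * x)) by (apply Rmult_le_compat_r; nra).
    lra.
Qed.
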